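(* Let $n\ge 1$. Every probability distribution $p$ on $\{0,1\}^n$ can be approximated arbitrarily well by the visible marginal distribution of an RBM with $n$ visible units and $\frac{2^n}{2}-1$ hidden units; that is, for every $\varepsilon>0$ there exist parameters $W,B,C$ of such an RBM whose visible marginal $q$ satisfies $D(p\,\|\,q)<\varepsilon$.
   Context: A Restricted Boltzmann Machine (RBM) with $n$ visible units and $m$ hidden units has parameters $W\in\mathbb{R}^{m\times n}$, $B\in\mathbb{R}^n$, $C\in\mathbb{R}^m$, and defines the joint distribution $p(v,h)=\frac{1}{Z}\exp(h^T W v + B\cdot v + C\cdot h)$ on $(v,h)\in\{0,1\}^n\times\{0,1\}^m$, where $Z$ is the normalizing constant; its visible marginal distribution is $q(v)=\sum_{h\in\{0,1\}^m}p(v,h)$. $D(p\|q)=\sum_v p(v)\log\frac{p(v)}{q(v)}$ denotes the Kullback–Leibler divergence. *)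

(* Defs.v *)
From mathcomp Require Import all_boot all_order all_algebra.
From mathcomp Require Import all_classical all_reals all_analysis.
Set Implicit Arguments. Unset Strict Implicit. Unset Printing Implicit Defensive.
Import Order.TTheory GRing.Theory Num.Theory.
Local Open Scope ring_scope.

Notation bvec k := {ffun 'I_k -> bool}.

Section RBM.
Variable R : realType.

Definition bitR (b : bool) : R := (b : nat)%:R.

Definition rbm_weight (n m : nat) (W : 'M[R]_(m, n)) (B : 'rV[R]_n) (C : 'rV[R]_m)
    (v : bvec n) (h : bvec m) : R :=
  expR ((\sum_(i < m) \sum_(j < n) bitR (h i) * W i j * bitR (v j))
        + (\sum_(j < n) B 0 j * bitR (v j))
        + (\sum_(i < m) C 0 i * bitR (h i))).

Definition rbm_Z (n m : nat) W B C : R :=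
  \sum_(v : bvec n) \sum_(h : bvec m) @rbm_weight n m W B C v h.

Definition rbm_joint (n m : nat) W B C (v : bvec n) (h : bvec m) : R :=
  @rbm_weight n m W B C v h / rbm_Z W B C.

Definition rbm_marginal (n m : nat) W B C (v : bvec n) : R :=
  \sum_(h : bvec m) @rbm_joint n m W B C v h.

Definition is_distr (T : finType) (p : T -> R) : Prop :=
  (forall x, 0 <= p x) /\ \sum_(x : T) p x = 1.

(* Kullback-Leibler divergence, with the convention 0 log (0/q) = 0 *)
Definition KL (T : finType) (p q : T -> R) : R :=
  \sum_(x : T | p x != 0) p x * ln (p x / q x).

End RBM.

(* Main.v *)
Require Import Defs.
From mathcomp Require Import all_boot all_order all_algebra.
From mathcomp Require Import all_classical all_reals all_analysis.
From mathcomp Require Import ring lra.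
Import Order.TTheory GRing.Theory Num.Theory.
Set Implicit Arguments. Unset Strict Implicit.
Local Open Scope ring_scope.

Section S.
Variable R : realType.

Definition theta n m (W : 'M[R]_(m, n)) (C : 'rV[R]_m) (v : bvec n) (i : 'I_m) : R :=
  \sum_(j < n) W i j * bitR R (v j) + C 0 i.
Definition dotB n (B : 'rV[R]_n) (v : bvec n) : R := \sum_(j < n) B 0 j * bitR R (v j).

Lemma bitR0 : bitR R false = 0. Proof. by rewrite /bitR. Qed.
Lemma bitR1 : bitR R true = 1. Proof. by rewrite /bitR. Qed.

Lemma weight_sum n m W B C (v : bvec n) :
  \sum_(h : bvec m) rbm_weight W B C v h =
  expR (dotB B v) * \prod_(i < m) (1 + expR (theta W C v i)).
Proof.
have E h : rbm_weight W B C v h =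
    expR (dotB B v) * \prod_(i < m) expR (bitR R (h i) * theta W C v i).
  rewrite /rbm_weight -expR_sum -expRD; congr expR.
  rewrite addrAC addrC; congr (_ + _).
  rewrite -big_split /=; apply: eq_bigr => i _.
  rewrite /theta mulrDr mulr_sumr; congr (_ + _); last by rewrite mulrC.
  by apply: eq_bigr => j _; rewrite mulrA.
under eq_bigr do rewrite E.
rewrite -mulr_sumr; congr (_ * _).
rewrite -(bigA_distr_bigA (fun i (b : bool) => expR (bitR R b * theta W C v i))) /=.
apply: eq_bigr => i _; rewrite big_bool /= bitR0 bitR1 mul0r mul1r expR0 addrC //.
Qed.

Lemma prod_bounds m (x : 'I_m -> R) (P : pred 'I_m) e :
  (forall i, 0 <= x i) -> (forall i, ~~ P i -> x i <= e) -> 0 <= e ->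
  \prod_(i < m) (1 + (P i)%:R * x i) <= \prod_(i < m) (1 + x i) /\
  \prod_(i < m) (1 + x i) <= (1 + e) ^+ m * \prod_(i < m) (1 + (P i)%:R * x i).
Proof.
move=> x0 xe e0; split.
  apply: ler_prod => i _; have := x0 i; case: (P i) => /= xi0; apply/andP; split; lra.
have -> : (1 + e) ^+ m = \prod_(i < m) (1 + e) by rewrite prodr_const card_ord.
rewrite -big_split /=; apply: ler_prod => i _; have := x0 i.
case Pi: (P i) => /= xi0; apply/andP; split; try lra.
  by rewrite mul1r; nra.
have := xe i; rewrite Pi => /(_ isT) xie; rewrite mul0r addr0 mulr1; lra.
Qed.

Lemma KL_bound (T : finType) (p q : T -> R) K :
  is_distr p -> (forall x, 0 < q x) -> 0 < K -> (forall x, p x <= K * q x) ->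
  KL p q <= ln K.
Proof.
move=> [p0 p1] q0 K0 pK.
apply: (@le_trans _ _ (\sum_(x | p x != 0) p x * ln K)).
  apply: ler_sum => x px; apply: ler_wpM2l => //.
  have ppos : 0 < p x by rewrite lt_neqAle eq_sym px p0.
  rewrite ler_ln ?posrE ?divr_gt0 //.
  by rewrite ler_pdivrMr.
rewrite -mulr_suml.
have -> : \sum_(x | p x != 0) p x = 1.
  rewrite -p1 [RHS](bigID (fun x => p x != 0)) /= [X in _ = _ + X]big1 ?addr0 //.
  by move=> x /negbNE/eqP.
by rewrite mul1r.
Qed.

Lemma small_mul (c eps : R) : 0 <= c -> 0 < eps -> c * (eps / (4 * (c + 1))) <= eps / 4.
Proof.
move=> c0 e0; rewrite mulrA ler_pdivrMr; last lra.
have -> : eps / 4 * (4 * (c + 1)) = eps * (c + 1) by field.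
nra.
Qed.

Section Cons.
Variable k : nat.
Definition zv : bvec k.+1 := [ffun _ => false].
Definition ev (v : bvec k.+1) : bvec k.+1 := [ffun j => if j == ord0 then false else v j].
Definition sv (w : bvec k.+1) : bvec k.+1 := [ffun j => if j == ord0 then true else w j].
Definition Ed : {set bvec k.+1} := [set w : bvec k.+1 | ~~ w ord0 & w != zv].
Definition Pop (w : bvec k.+1) : R := \sum_j bitR R (w j).
Definition dist (v w : bvec k.+1) : R := \sum_j bitR R (ev v j != w j).

Lemma bitR_ge0 b : 0 <= bitR R b. Proof. by case: b; rewrite ?bitR0 ?bitR1. Qed.

Lemma v_split (v : bvec k.+1) : v = if v ord0 then sv (ev v) else ev v.
Proof.
apply/ffunP => j; case: ifP => h; rewrite !ffunE; case: eqP => // ->; by rewrite h.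
Qed.

Lemma ev_ord0 (v : bvec k.+1) : ev v ord0 = false. Proof. by rewrite ffunE eqxx. Qed.

Lemma ev_E_or_z (v : bvec k.+1) : ev v \in Ed \/ ev v = zv.
Proof.
case: (eqVneq (ev v) zv) => h; [by right | left].
by rewrite inE ev_ord0 h.
Qed.

Lemma ev_sv (w : bvec k.+1) : ev (sv w) = ev w.
Proof. by apply/ffunP => j; rewrite !ffunE; case: eqP. Qed.

Lemma ev_E (w : bvec k.+1) : w \in Ed -> ev w = w.
Proof.
rewrite inE => /andP[/negbTE h _]; apply/ffunP => j; rewrite ffunE.
by case: eqP => // ->; rewrite h.
Qed.

Lemma sum_if0 (f : 'I_k.+1 -> R) : \sum_j (if j == ord0 then f j else 0) = f ord0.
Proof. by rewrite -big_mkcond /= big_pred1_eq. Qed.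

Lemma sum_ge_term (f : 'I_k.+1 -> bool) j : f j -> 1 <= \sum_i bitR R (f i).
Proof.
move=> fj; rewrite (bigD1 j) //= fj bitR1 lerDl; apply: sumr_ge0 => i _; exact: bitR_ge0.
Qed.

Lemma dist0 (v w : bvec k.+1) : ev v = w -> dist v w = 0.
Proof. by move=> <-; rewrite /dist big1 // => j _; rewrite eqxx bitR0. Qed.

Lemma dist1 (v w : bvec k.+1) : ev v != w -> 1 <= dist v w.
Proof.
move=> h; have [j hj] : exists j, ev v j != w j.
  apply/existsP; apply: contraR h => /existsPn H; apply/eqP/ffunP => j.
  by have := H j; rewrite negbK => /eqP.
exact: (sum_ge_term hj).
Qed.

Lemma Pop1 (w : bvec k.+1) : w \in Ed -> 1 <= Pop w.
Proof.
rewrite inE => /andP[_ h]; have [j hj] : exists j, w j.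
  apply/existsP; apply: contraR h => /existsPn H; apply/eqP/ffunP => j.
  by have := H j; rewrite ffunE => /negbTE.
exact: (sum_ge_term hj).
Qed.

Definition Wm m (g : 'I_m -> bvec k.+1) (gam K : 'I_m -> R) : 'M[R]_(m, k.+1) :=
  \matrix_(i, j) (if j == ord0 then gam i else if g i j then K i else - K i).
Definition Cm m (g : 'I_m -> bvec k.+1) (a K : 'I_m -> R) : 'rV[R]_m :=
  \row_i (a i - K i * Pop (g i)).
Definition Bm (beta L : R) : 'rV[R]_k.+1 := \row_j (if j == ord0 then beta else - L).

Lemma theta_eq m (g : 'I_m -> bvec k.+1) (gam K a : 'I_m -> R) (v : bvec k.+1) (i : 'I_m) : g i ord0 = false ->
  theta (Wm g gam K) (Cm g a K) v i = a i + gam i * bitR R (v ord0) - K i * dist v (g i).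
Proof.
move=> g0; rewrite /theta mxE /Pop /dist.
have -> : \sum_(j < k.+1) Wm g gam K i j * bitR R (v j) =
   \sum_j ((if j == ord0 then gam i * bitR R (v j) else 0)
          + (K i * bitR R (g i j) - K i * bitR R (ev v j != g i j))).
  apply: eq_bigr => j _; rewrite mxE ffunE; case: eqP => [->|_].
    by rewrite g0 eqxx bitR0; ring.
  by case: (v j); case: (g i j); rewrite ?bitR0 ?bitR1 /=; ring.
rewrite big_split /= sum_if0 big_split /= sumrN -!big_distrr /=; ring.
Qed.

Lemma dotB_eq beta L (v : bvec k.+1) :
  dotB (Bm beta L) v = beta * bitR R (v ord0) - L * Pop (ev v).
Proof.
rewrite /dotB /Pop.
have -> : \sum_(j < k.+1) Bm beta L 0 j * bitR R (v j) =
   \sum_j ((if j == ord0 then beta * bitR R (v j) else 0) - L * bitR R (ev v j)).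
  apply: eq_bigr => j _; rewrite !mxE ffunE; case: eqP => [->|_].
    by rewrite bitR0; ring.
  ring.
by rewrite big_split /= sum_if0 sumrN -big_distrr.
Qed.
End Cons.

Lemma gt1 (M t eta y : R) : 0 < M -> 0 < eta -> eta <= t -> - ln (M * eta) < y ->
  1 < M * t * expR y.
Proof.
move=> M0 e0 et H.
have Me0 : 0 < M * eta by rewrite mulr_gt0.
have : expR (- ln (M * eta)) < expR y by rewrite ltr_expR.
rewrite expRN lnK ?posrE // => H2.
apply: (@lt_le_trans _ _ (M * eta * expR y)).
  by rewrite -(mulfV (lt0r_neq0 Me0)) ltr_pM2l.
apply: ler_wpM2r; first exact: expR_ge0.
by apply: ler_wpM2l => //; exact: ltW.
Qed.

Lemma Pop_zv k : Pop (zv k) = 0.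
Proof. by rewrite /Pop big1 // => j _; rewrite ffunE bitR0. Qed.

Lemma zv_notin k : zv k \notin Ed k.
Proof. by rewrite inE eqxx andbF. Qed.

Lemma core k m (g : 'I_m -> bvec k.+1) (ginj : injective g)
  (gE : forall i, g i \in Ed k) (Esurj : forall w, w \in Ed k -> exists i, g i = w)
  (p : bvec k.+1 -> R) (hp : is_distr p) (eps : R) (heps : 0 < eps) :
  exists (W : 'M[R]_(m, k.+1)) (B : 'rV[R]_k.+1) (C : 'rV[R]_m),
    KL p (rbm_marginal W B C) < eps.
Proof.
have [p0 p1] := hp.
pose N : R := #|{: bvec k.+1}|%:R.
pose eta := eps / (4 * (N + 1)).
pose e' := eps / (4 * (m%:R + 1)).
have eta0 : 0 < eta by rewrite /eta divr_gt0 // mulr_gt0 // ltr_wpDl // ler0n.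
have e'0 : 0 < e' by rewrite /e' divr_gt0 // mulr_gt0 // ltr_wpDl // ler0n.
pose T v := p v + eta.
have Teta v : eta <= T v by rewrite /T lerDr.
have T0 v : 0 < T v by apply: lt_le_trans (Teta v).
pose M := (T (zv k))^-1.
have M0 : 0 < M by rewrite invr_gt0.
pose beta := ln (M * T (sv (zv k))).
pose L := `|ln (M * eta)| + `|beta| + 1.
have L0 : 0 <= L by rewrite /L; have := normr_ge0 (ln (M * eta)); have := normr_ge0 beta; lra.
pose Y0 w := M * T w * expR (L * Pop w) - 1.
pose Y1 w := M * T (sv w) * expR (L * Pop w - beta) - 1.
have Y0pos w : w \in Ed k -> 0 < Y0 w.
  move=> wE; rewrite /Y0 subr_gt0; apply: (gt1 (eta := eta)) => //.
  have P1 := Pop1 wE.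
  have : L <= L * Pop w by rewrite ler_peMr.
  have := ler_norm (- ln (M * eta)); rewrite normrN.
  have := normr_ge0 beta; rewrite /L. lra.
have Y1pos w : w \in Ed k -> 0 < Y1 w.
  move=> wE; rewrite /Y1 subr_gt0; apply: (gt1 (eta := eta)) => //.
  have P1 := Pop1 wE.
  have : L <= L * Pop w by rewrite ler_peMr.
  have := ler_norm (- ln (M * eta)); rewrite normrN.
  have := ler_norm beta; rewrite /L; lra.
pose a i := ln (Y0 (g i)).
pose gam i := ln (Y1 (g i)) - ln (Y0 (g i)).
pose K i := `|a i| + `|gam i| + `|ln e'|.
have g0 i : g i ord0 = false by have := gE i; rewrite inE => /andP[/negbTE].
pose W := Wm g gam K; pose B := Bm k beta L; pose C := Cm g a K.
exists W, B, C.
have off v i : g i != ev v -> expR (theta W C v i) <= e'.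
  move=> ne; rewrite /W /C theta_eq //.
  have d1 : 1 <= dist v (g i) by apply: dist1; rewrite eq_sym.
  have K0 : 0 <= K i by rewrite /K; have := normr_ge0 (a i); have := normr_ge0 (gam i);
    have := normr_ge0 (ln e'); lra.
  have Kd : K i <= K i * dist v (g i) by rewrite ler_peMr.
  have ab : a i + gam i * bitR R (v ord0) <= `|a i| + `|gam i|.
    have := ler_norm (a i); have := ler_norm (gam i); have := normr_ge0 (gam i).
    by case: (v ord0); rewrite ?bitR0 ?bitR1; lra.
  have le : ln e' >= - `|ln e'| by have := ler_norm (- ln e'); rewrite normrN; lra.
  rewrite -[X in _ <= X](lnK (x := e')) ?posrE // ler_expR.
  rewrite /K in Kd *; lra.
have Gv v : expR (dotB B v) * \prod_(i < m) (1 + (g i == ev v)%:R * expR (theta W C v i))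
            = M * T v.
  rewrite /B dotB_eq.
  have hv := v_split v.
  case: (ev_E_or_z v) => [vE | vz].
    have [i0 hi0] := Esurj _ vE.
    rewrite (bigD1 i0) //= big1 => [|i ne]; last first.
      have -> : (g i == ev v) = false.
        by apply/negbTE; rewrite -hi0; apply: contra ne => /eqP /ginj ->.
      by rewrite mul0r addr0.
    rewrite hi0 eqxx mul1r mulr1 /W /C theta_eq // dist0 // mulr0 subr0.
    rewrite /a /gam hi0.
    have y0 := Y0pos _ vE; have y1 := Y1pos _ vE.
    case: (v ord0) hv => hv; rewrite ?bitR0 ?bitR1.
      have -> : ln (Y0 (ev v)) + (ln (Y1 (ev v)) - ln (Y0 (ev v))) * 1 = ln (Y1 (ev v)).
        by ring.
      rewrite lnK ?posrE // /Y1 [in RHS]hv.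
      have -> : 1 + (M * T (sv (ev v)) * expR (L * Pop (ev v) - beta) - 1) =
                M * T (sv (ev v)) * expR (L * Pop (ev v) - beta) by ring.
      rewrite mulrCA -mulrA -expRD.
      have -> : beta * 1 - L * Pop (ev v) + (L * Pop (ev v) - beta) = 0 by ring.
      by rewrite expR0 mulr1.
    have -> : ln (Y0 (ev v)) + (ln (Y1 (ev v)) - ln (Y0 (ev v))) * 0 = ln (Y0 (ev v)).
      by ring.
    rewrite lnK ?posrE // /Y0 [in RHS]hv.
    have -> : 1 + (M * T (ev v) * expR (L * Pop (ev v)) - 1) =
              M * T (ev v) * expR (L * Pop (ev v)) by ring.
    rewrite mulrCA -mulrA -expRD.
    have -> : beta * 0 - L * Pop (ev v) + (L * Pop (ev v)) = 0 by ring.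
    by rewrite expR0 mulr1.
  rewrite big1 => [|i _]; last first.
    have -> : (g i == ev v) = false.
      apply/negbTE; rewrite vz; apply: contraNneq (zv_notin k) => <-; exact: gE.
    by rewrite mul0r addr0.
  rewrite mulr1 vz Pop_zv mulr0 subr0.
  case: (v ord0) hv => hv; rewrite ?bitR0 ?bitR1.
    by rewrite mulr1 /beta lnK ?posrE ?mulr_gt0 // hv vz.
  by rewrite mulr0 expR0 hv vz /M mulVf // lt0r_neq0.
pose F v := \sum_(h : bvec m) rbm_weight W B C v h.
have FE v : F v = expR (dotB B v) * \prod_(i < m) (1 + expR (theta W C v i)).
  exact: weight_sum.
have Fb v : M * T v <= F v /\ F v <= (1 + e') ^+ m * (M * T v).
  have [l u] := prod_bounds (x := fun i => expR (theta W C v i))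
    (P := fun i => g i == ev v) (fun i => expR_ge0 _) (fun i ne => off v i ne) (ltW e'0).
  move: l u => /= l u.
  rewrite FE -(Gv v); split.
    by rewrite ler_wpM2l ?expR_ge0.
  by rewrite mulrCA ler_wpM2l // expR_ge0.
have MT0 v : 0 < M * T v by rewrite mulr_gt0.
have F0 v : 0 < F v by apply: lt_le_trans (proj1 (Fb v)).
pose Z := \sum_u F u.
have qE v : rbm_marginal W B C v = F v / Z.
  by rewrite /rbm_marginal /rbm_joint -mulr_suml.
pose S := \sum_u T u.
have SE : S = 1 + N * eta.
  by rewrite /S big_split /= p1 sumr_const mulr_natl /N.
have N0 : 0 <= N by rewrite /N ler0n.
have S0 : 0 < S by rewrite SE; have := mulr_ge0 N0 (ltW eta0); lra.
have Zle : Z <= (1 + e') ^+ m * (M * S).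
  rewrite /Z /S mulr_sumr mulr_sumr; apply: ler_sum => u _; exact: (proj2 (Fb u)).
have Z0 : 0 < Z by apply: lt_le_trans (F0 (zv k)) _; rewrite /Z (bigD1 (zv k)) //= lerDl;
  apply: sumr_ge0 => u _; exact: ltW.
have E0 : 0 < (1 + e') ^+ m by rewrite exprn_gt0 // ltr_wpDr // ltW.
pose K0 := (1 + e') ^+ m * S.
have K00 : 0 < K0 by rewrite mulr_gt0.
apply: (@le_lt_trans _ _ (ln K0)).
  apply: KL_bound => //.
    by move=> v; rewrite qE divr_gt0.
  move=> v; rewrite qE mulrA ler_pdivlMr //.
  apply: (@le_trans _ _ (p v * ((1 + e') ^+ m * (M * S)))).
    by rewrite ler_wpM2l.
  have -> : p v * ((1 + e') ^+ m * (M * S)) = K0 * (M * p v) by rewrite /K0; ring.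
  rewrite ler_pM2l //; apply: le_trans (proj1 (Fb v)).
  by rewrite ler_pM2l // /T lerDl ltW.
rewrite /K0 lnM ?posrE // lnXn ?ltr_wpDr ?ltW // SE.
have h1 : ln (1 + e') <= e' by apply: le_ln1Dx; lra.
have h2 : ln (1 + N * eta) <= N * eta by apply: le_ln1Dx; have := mulr_ge0 N0 (ltW eta0); lra.
have h3 : m%:R * e' <= eps / 4 by apply: small_mul; rewrite ?ler0n.
have h4 : N * eta <= eps / 4 by apply: small_mul.
have h5 : ln (1 + e') *+ m <= m%:R * e'.
  by rewrite -[ln _ *+ m]mulr_natl; apply: ler_wpM2l; rewrite ?ler0n.
lra.
Qed.

Definition flip0 k (w : bvec k.+1) : bvec k.+1 :=
  [ffun j => if j == ord0 then ~~ w j else w j].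

Lemma flip0K k : involutive (@flip0 k).
Proof. by move=> w; apply/ffunP => j; rewrite !ffunE; case: eqP => // _; rewrite negbK. Qed.

Lemma card_Ed k : #|Ed k| = (2 ^ k.+1 %/ 2 - 1)%N.
Proof.
pose A : {set bvec k.+1} := [set w : bvec k.+1 | ~~ w ord0].
have hC : ~: A = (@flip0 k) @: A.
  rewrite (can2_imset_pre _ (@flip0K k) (@flip0K k)); apply/setP => w.
  by rewrite !inE ffunE eqxx negbK.
have cA : #|~: A| = #|A| by rewrite hC card_imset //; exact: (can_inj (@flip0K k)).
have tot := cardsC A; rewrite cA card_ffun card_bool card_ord in tot.
have -> : #|Ed k| = (#|A| - 1)%N.
  rewrite (cardsD1 (zv k) A) inE ffunE /= addnC addnK.
  by apply: eq_card => w; rewrite !inE andbC.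
by rewrite -tot addnn -muln2 mulnK.
Qed.
End S.

Theorem corollary1 (R : realType) (n : nat) (hn : (1 <= n)%N)
    (p : bvec n -> R) (hp : is_distr p) (eps : R) (heps : 0 < eps) :
  exists (W : 'M[R]_(2 ^ n %/ 2 - 1, n)) (B : 'rV[R]_n) (C : 'rV[R]_(2 ^ n %/ 2 - 1)),
    KL p (rbm_marginal W B C) < eps.
Proof.
case: n hn p hp => [//|k] _ p hp.
pose g (i : 'I_(2 ^ k.+1 %/ 2 - 1)) : bvec k.+1 :=
  enum_val (cast_ord (esym (card_Ed k)) i).
apply: (core (g := g)) => //.
- by move=> i j /enum_val_inj /cast_ord_inj.
- by move=> i; exact: enum_valP.
- move=> w wE; exists (cast_ord (card_Ed k) (enum_rank_in wE w)).
  by rewrite /g cast_ordK enum_rankK_in.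
Qed.
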